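(* Let $X_1,\dots,X_n$ be i.i.d. with c.d.f. $F$, mean $\mu$ and finite standard deviation $\sigma$. Let $k\in\mathbb{N}$ with $k<n/2$, and let $v>0$ be such that \[\frac e6\,\rho_{F,2}\left(\frac{1}{36v^2}\frac kn\right)\leq v.\] Then \[\Pr\left(\Delta_{n,k}>12v\,\sigma\sqrt{\frac nk}\right)\leq e^{-k}.\]
   Context: With order statistics $X_{(1)}\le\dots\le X_{(n)}$, $\Delta_{n,k}:=X_{(n-k+1)}-X_{(k)}$. For $\xi>0$, $\rho_{F,2}(\xi):=\sup\{(\mathbb{E}[|X_1-\mu|^2Z])^{1/2}/\sigma: 0\le Z\le1 \text{ a random variable (jointly defined with } X_1), \mathbb{E}Z\le\xi\}$ if $\sigma>0$, and $0$ if $\sigma=0$. *)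

(* Defs.v *)
From HB Require Import structures.
From mathcomp Require Import all_boot all_order all_algebra.
From mathcomp Require Import all_classical all_reals all_analysis.
Set Implicit Arguments. Unset Strict Implicit. Unset Printing Implicit Defensive.
Import Order.TTheory GRing.Theory Num.Theory.
Local Open Scope classical_set_scope.
Local Open Scope ring_scope.

Definition rv_mean {R : realType} {d : measure_display} {Om : measurableType d}
  (Q : probability Om R) (Y : Om -> R) : R :=
  fine (\int[Q]_w (Y w)%:E)%E.

Definition rv_sd {R : realType} {d : measure_display} {Om : measurableType d}
  (Q : probability Om R) (Y : Om -> R) : R :=
  Num.sqrt (fine (\int[Q]_w (((Y w - rv_mean Q Y) ^+ 2)%:E))%E).

(* Mutual independence of a finite family of real random variables:
   the product rule for every family of Borel sets (subfamilies are
   obtained by taking B i = setT). *)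
Definition mutually_independent {R : realType} {d : measure_display}
  {Om : measurableType d} (P : probability Om R) (n : nat) (X : 'I_n -> Om -> R) :=
  forall B : 'I_n -> set R, (forall i, measurable (B i)) ->
    P (\bigcap_(i in [set: 'I_n]) (X i @^-1` B i)) = (\prod_(i < n) P (X i @^-1` B i))%E.

Definition has_law {R : realType} {d : measure_display} {Om : measurableType d}
  (Q : probability Om R) (Y : Om -> R) (F : set R -> \bar R) :=
  forall A : set R, measurable A -> Q (Y @^-1` A) = F A.

Definition rhoF2 {R : realType} (F : set R -> \bar R) (mu sigma xi : R) : \bar R :=
  if sigma > 0 then
    ereal_sup [set r : \bar R | exists (d : measure_display) (Om : measurableType d)
        (Q : probability Om R) (Y Z : Om -> R),
        [/\ measurable_fun setT Y /\ measurable_fun setT Z, has_law Q Y F,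
            (forall w, 0 <= Z w <= 1),
            (\int[Q]_w (Z w)%:E <= xi%:E)%E &
            r = (Num.sqrt (fine (\int[Q]_w ((`|Y w - mu| ^+ 2 * Z w)%:E))%E) / sigma)%:E]]
  else 0%E.

(* order statistics X_(1) <= ... <= X_(n) of a sample x (1-indexed) *)
Definition ostat {R : realType} {n : nat} (x : 'I_n -> R) (j : nat) : R :=
  nth 0 (sort <=%R [seq x i | i <- enum 'I_n]) j.-1.

Definition Delta {R : realType} {n : nat} (k : nat) (x : 'I_n -> R) : R :=
  ostat x (n - k + 1) - ostat x k.

Definition law {R : realType} {d : measure_display} {Om : measurableType d}
  (Q : probability Om R) (Y : Om -> R) : set R -> \bar R :=
  fun A => Q (Y @^-1` A).

(* Main.v *)
Set Warnings "-notation-overridden".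
Require Import Defs.
From HB Require Import structures.
From mathcomp Require Import all_boot all_order all_algebra.
From mathcomp Require Import all_classical all_reals all_analysis.
From mathcomp Require Import measurable_realfun.
From mathcomp Require Import zify ring lra.
Import Order.TTheory GRing.Theory Num.Theory.
Local Open Scope classical_set_scope.
Local Open Scope ring_scope.
Section Comb.
Variable R : realType.
Implicit Types L : seq R.

Lemma cnt_ge L j : sorted <=%R L -> (j < size L)%N ->
  (size L - j <= count (fun y : R => (nth 0 L j <= y)%R) L)%N.
Proof.
move=> sL jL; move En : (size L) => n in jL *.
pose P : pred R := (fun y => nth 0 L j <= y).
have hd : count P (drop j L) = (size L - j)%N.
  rewrite -size_drop; apply/eqP; rewrite -all_count.
  apply/(all_nthP 0) => i; rewrite size_drop => ilt.
  rewrite nth_drop /P; apply: (sorted_leq_nth le_trans lexx) => //; rewrite ?inE /=; (rewrite ?En in ilt *; lia).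
have := count_cat P (take j L) (drop j L); rewrite cat_take_drop => ->.
by rewrite hd En leq_addl.
Qed.

Lemma cnt_ge_inv L j y : sorted <=%R L -> (j < size L)%N ->
  (size L - j <= count (fun z : R => (y <= z)%R) L)%N -> y <= nth 0 L j.
Proof.
move=> sL jL; move En : (size L) => n in jL *; rewrite leNgt; apply: contraTN => hlt.
pose P : pred R := (fun z => y <= z).
have ht : count P (take j.+1 L) = 0%N.
  apply/eqP; rewrite -leqn0 leqNgt -has_count; apply/(has_nthP 0) => -[i].
  rewrite size_take => ilt; rewrite nth_take; last by move: ilt; case: ifP; (rewrite ?En; lia).
  rewrite /P; apply/negP; rewrite -ltNge; apply: (le_lt_trans _ hlt).
  apply: (sorted_leq_nth le_trans lexx) => //; rewrite ?inE /=; move: ilt; case: ifP; (rewrite ?En; lia).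
have := count_cat P (take j.+1 L) (drop j.+1 L); rewrite cat_take_drop => ->.
rewrite ht add0n -ltnNge; apply: (leq_ltn_trans (count_size _ _)).
rewrite size_drop; (rewrite ?En; lia).
Qed.

Lemma cnt_le L j : sorted <=%R L -> (j < size L)%N ->
  (j.+1 <= count (fun y : R => (y <= nth 0 L j)%R) L)%N.
Proof.
move=> sL jL; move En : (size L) => n in jL *.
pose P : pred R := (fun y => y <= nth 0 L j).
have hd : count P (take j.+1 L) = j.+1.
  have hs : size (take j.+1 L) = j.+1 by rewrite size_take; case: ifP; (rewrite ?En; lia).
  suff: count P (take j.+1 L) = size (take j.+1 L) by rewrite hs.
  apply/eqP; rewrite -all_count.
  apply/(all_nthP 0) => i; rewrite size_take => ilt.
  rewrite nth_take; last by move: ilt; case: ifP; (rewrite ?En; lia).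
  rewrite /P; apply: (sorted_leq_nth le_trans lexx) => //; rewrite ?inE /=; move: ilt; case: ifP; (rewrite ?En; lia).
have := count_cat P (take j.+1 L) (drop j.+1 L); rewrite cat_take_drop => ->.
by rewrite hd leq_addr.
Qed.

Lemma cnt_le_inv L j y : sorted <=%R L -> (j < size L)%N ->
  (j.+1 <= count (fun z : R => (z <= y)%R) L)%N -> nth 0 L j <= y.
Proof.
move=> sL jL; move En : (size L) => n in jL *; rewrite leNgt; apply: contraTN => hlt.
pose P : pred R := (fun z => z <= y).
have ht : count P (drop j L) = 0%N.
  apply/eqP; rewrite -leqn0 leqNgt -has_count; apply/(has_nthP 0) => -[i].
  rewrite size_drop => ilt; rewrite nth_drop.
  rewrite /P; apply/negP; rewrite -ltNge; apply: (lt_le_trans hlt).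
  apply: (sorted_leq_nth le_trans lexx) => //; rewrite ?inE /=; (rewrite ?En in ilt *; lia).
have := count_cat P (take j L) (drop j L); rewrite cat_take_drop => ->.
rewrite ht addn0 -ltnNge ltnS; apply: (leq_trans (count_size _ _)).
rewrite size_take; case: ifP; (rewrite ?En; lia).
Qed.
End Comb.

Section RealIneq.
Variable R : realType.

Lemma ffact_le_exp (n m : nat) : (n ^_ m <= n ^ m)%N.
Proof.
elim: m n => [|m IH] n; first by rewrite ffactn0 expn0.
rewrite ffactnS expnS leq_mul2l; case: n => [//|n] /=.
apply: (leq_trans (IH n)); case: m {IH} => [|m]; first by rewrite !expn0.
rewrite leq_exp2r //.
Qed.

Lemma succ_pow_le (k : nat) : (k.+1%:R : R) ^+ k <= expR 1 * k%:R ^+ k.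
Proof.
case: k => [|k]; first by rewrite !expr0 mulr1 -expR0 ler_expR.
have kp : (0 : R) < k.+1%:R by rewrite ltr0n.
have -> : (k.+2%:R : R) = k.+1%:R * (1 + k.+1%:R^-1).
  by rewrite mulrDr mulr1 mulfV ?gt_eqF // -natr1.
rewrite exprMn mulrC; apply: ler_wpM2r; first by rewrite exprn_ge0 // ltW.
have -> : expR (1 : R) = expR (k.+1%:R^-1) ^+ k.+1.
  by rewrite -expRM_natr mulVf ?gt_eqF.
apply: lerXn2r; rewrite ?inE ?expR_ge0 //; last exact: expR_ge1Dx.
- by rewrite nnegrE addr_ge0 // invr_ge0 ltW.
- by rewrite nnegrE expR_ge0.
Qed.

Lemma pow_le_expR_fact (k : nat) : (k%:R : R) ^+ k <= expR k%:R * k`!%:R.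
Proof.
elim: k => [|k IH]; first by rewrite expr0 expR0 mul1r.
rewrite exprS factS natrM.
have -> : expR k.+1%:R = expR 1 * expR k%:R :> R by rewrite -expRD -natr1 addrC.
apply: (le_trans (ler_wpM2l _ (succ_pow_le k))); first by rewrite ler0n.
rewrite mulrCA -!mulrA; apply: ler_wpM2l; first exact: expR_ge0.
rewrite mulrCA; apply: ler_wpM2l; [by rewrite ler0n| exact: IH].
Qed.

Lemma binom_tail_bound (N k : nat) (p : R) : 0 <= p ->
  N%:R * p <= k%:R * expR (-2) -> 'C(N, k)%:R * p ^+ k <= expR (- k%:R).
Proof.
move=> p0 Np.
have f0 : (0 : R) < k`!%:R by rewrite ltr0n fact_gt0.
have hC : ('C(N, k)%:R : R) <= N%:R ^+ k / k`!%:R.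
  rewrite ler_pdivlMr // -natrM -natrX ler_nat bin_ffact; exact: ffact_le_exp.
apply: (le_trans (ler_wpM2r (exprn_ge0 _ p0) hC)).
rewrite mulrAC -exprMn.
have h2 : (N%:R * p) ^+ k <= (k%:R * expR (-2)) ^+ k.
  by apply: lerXn2r; rewrite ?inE ?nnegrE ?mulr_ge0 ?ler0n ?expR_ge0.
apply: (le_trans (ler_wpM2r _ h2)); first by rewrite invr_ge0 ltW.
rewrite exprMn -expRM_natr ler_pdivrMr //.
have -> : expR (- k%:R) * k`!%:R = expR (- 2 * k%:R) * (expR k%:R * k`!%:R) :> R.
  by rewrite mulrA -expRD; congr (expR _ * _); ring.
by rewrite mulrC; apply: ler_wpM2l; [exact: expR_ge0|exact: pow_le_expR_fact].
Qed.
End RealIneq.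
Section MeasLemmas.
Context {R : realType} {d : measure_display} {Om : measurableType d}.

Lemma measure_bigsetU_le (mu : {measure set Om -> \bar R}) (I : Type) (r : seq I)
  (Pp : pred I) (F : I -> set Om) : (forall i, measurable (F i)) ->
  (mu (\big[setU/set0]_(i <- r | Pp i) F i) <= \sum_(i <- r | Pp i) mu (F i))%E.
Proof.
move=> mF; elim: r => [|i r IH]; first by rewrite !big_nil measure0.
rewrite !big_cons; case: ifP => _ //.
apply: le_trans (measureU2 _ _ _) _ => //; first exact: bigsetU_measurable.
exact: leeD2l.
Qed.

Lemma measurable_count (I : Type) (Q : I -> Om -> bool) (r : seq I) (m : nat) :
  (forall i, measurable [set w | Q i w]) ->
  measurable [set w | (m <= count (fun i => Q i w) r)%N].
Proof.
move=> mQ; elim: r m => [|i r IH] m.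
  case: m => [|m]; first by rewrite [X in measurable X](_ : _ = setT) //; apply/seteqP; split.
  by rewrite [X in measurable X](_ : _ = set0) //; apply/seteqP; split.
case: m => [|m].
  by rewrite [X in measurable X](_ : _ = setT) //; apply/seteqP; split.
rewrite [X in measurable X](_ : _ = ([set w | Q i w] `&` [set w | (m <= count (fun i => Q i w) r)%N])
   `|` [set w | (m.+1 <= count (fun i => Q i w) r)%N]).
  by apply: measurableU => //; apply: measurableI.
apply/seteqP; split => w /=.
  case: (Q i w) => /=; rewrite ?add1n ?add0n ?ltnS; first by move=> h; left.
  by move=> h; right.
case; first by case=> -> /=; rewrite add1n ltnS.
move=> h; case: (Q i w) => /=; last by rewrite add0n.
by rewrite add1n ltnS ltnW.
Qed.
End MeasLemmas.

Lemma exists_subset_card (T : finType) (A : {set T}) (k : nat) :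
  (k <= #|A|)%N -> exists S : {set T}, S \subset A /\ #|S| = k.
Proof.
elim: k => [|k IH] h.
  by exists (finset.set0 : {set T}); rewrite finset.sub0set cards0.
have [S [SA cS]] := IH (ltnW h).
have : (0 < #|A :\: S|)%N by rewrite cardsD (finset.setIidPr SA) cS subn_gt0.
case/card_gt0P => x; rewrite inE => /andP [xS xA].
exists (x |: S); split; first by rewrite finset.subUset finset.sub1set xA SA.
by rewrite cardsU1 xS cS.
Qed.
Section OStat.
Variable R : realType.
Variable N : nat.
Implicit Types x : 'I_N -> R.

Definition Ls x := sort <=%R [seq x i | i <- enum 'I_N].

Lemma Ls_sorted x : sorted <=%R (Ls x).
Proof. exact: (sort_sorted (@le_total _ R)). Qed.

Lemma Ls_size x : size (Ls x) = N.
Proof. by rewrite /Ls size_sort size_map size_enum_ord. Qed.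

Lemma Ls_count x (q : pred R) : count q (Ls x) = count (fun i => q (x i)) (enum 'I_N).
Proof.
rewrite /Ls; have /permP -> : perm_eq (sort <=%R [seq x i | i <- enum 'I_N]) [seq x i | i <- enum 'I_N].
  by rewrite perm_sort.
by rewrite count_map.
Qed.

Lemma Delta_eq x k : (1 <= k)%N -> (k <= N)%N ->
  Delta k x = nth 0 (Ls x) (N - k) - nth 0 (Ls x) k.-1.
Proof. by move=> k1 kN; rewrite /Delta /ostat addn1. Qed.

Lemma Delta_count x k (mu s : R) : (1 <= k)%N -> (k <= N)%N ->
  2 * s < Delta k x -> (k <= count (fun i => (s < `|x i - mu|)%R) (enum 'I_N))%N.
Proof.
move=> k1 kN; rewrite Delta_eq // => hD.
have sL := Ls_sorted x; have zL := Ls_size x.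
rewrite -(Ls_count x (fun y => s < `|y - mu|)).
have [h1|h1] : s < nth 0 (Ls x) (N - k) - mu \/ s < mu - nth 0 (Ls x) k.-1.
  case: (ltP s (nth 0 (Ls x) (N - k) - mu)) => h; [by left | right; lra].
- have := @cnt_ge _ _ (N - k) sL; rewrite zL => /(_ ltac:(clear -kN k1; lia)).
  have -> : (N - (N - k) = k)%N by clear -kN k1; lia.
  move=> /leq_trans; apply; apply: sub_count => y /= ay.
  apply: (lt_le_trans h1); apply: le_trans (ler_norm _); lra.
- have := @cnt_le _ _ k.-1 sL; rewrite zL => /(_ ltac:(clear -kN k1; lia)).
  have -> : (k.-1.+1 = k)%N by clear -kN k1; lia.
  move=> /leq_trans; apply; apply: sub_count => y /= yb.
  apply: (lt_le_trans h1); rewrite distrC; apply: le_trans (ler_norm _); lra.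
Qed.

Lemma Delta_char x k (T : R) : (1 <= k)%N -> (k <= N)%N ->
  T < Delta k x <-> exists a b, [/\ T < x a - x b,
     (k <= count (fun i => (x a <= x i)%R) (enum 'I_N))%N &
     (k <= count (fun i => (x i <= x b)%R) (enum 'I_N))%N].
Proof.
move=> k1 kN; rewrite Delta_eq //.
have sL := Ls_sorted x; have zL := Ls_size x.
split.
- move=> hD.
  have : nth 0 (Ls x) (N - k) \in [seq x i | i <- enum 'I_N].
    by rewrite -(mem_sort <=%R) mem_nth // zL; clear -kN k1; lia.
  case/mapP => a _ ea.
  have : nth 0 (Ls x) k.-1 \in [seq x i | i <- enum 'I_N].
    by rewrite -(mem_sort <=%R) mem_nth // zL; clear -kN k1; lia.
  case/mapP => b _ eb.
  exists a, b; split; first by rewrite -ea -eb.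
  + rewrite -(Ls_count x (fun y => x a <= y)) -ea.
    have := @cnt_ge _ _ (N - k) sL; rewrite zL => /(_ ltac:(clear -kN k1; lia)).
    by have -> : (N - (N - k) = k)%N by clear -kN k1; lia.
  + rewrite -(Ls_count x (fun y => y <= x b)) -eb.
    have := @cnt_le _ _ k.-1 sL; rewrite zL => /(_ ltac:(clear -kN k1; lia)).
    by have -> : (k.-1.+1 = k)%N by clear -kN k1; lia.
- case=> a [b [hT ca cb]].
  have h1 : x a <= nth 0 (Ls x) (N - k).
    apply: cnt_ge_inv => //; first by rewrite zL; clear -kN k1; lia.
    by rewrite zL (Ls_count x (fun y => x a <= y)); have -> : (N - (N - k) = k)%N by clear -kN k1; lia.
  have h2 : nth 0 (Ls x) k.-1 <= x b.
    apply: cnt_le_inv => //; first by rewrite zL; clear -kN k1; lia.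
    by rewrite (Ls_count x (fun y => y <= x b)); have -> : (k.-1.+1 = k)%N by clear -kN k1; lia.
  lra.
Qed.
End OStat.
Lemma card_count (N : nat) (q : pred 'I_N) : #|[set i | q i]%SET| = count q (enum 'I_N).
Proof.
rewrite -sum1_count big_enum_cond /= -sum1_card.
by apply: eq_bigl => i; rewrite finset.inE.
Qed.

Section MeasPre.
Context {R : realType} {d : measure_display} {Om : measurableType d}.

Lemma meas_pre_lt (h : Om -> R) (c : R) : measurable_fun setT h ->
  measurable [set w | c < h w].
Proof.
move=> mh; have := mh measurableT _ (measurable_itv `]c, +oo[); rewrite setTI.
congr measurable; apply/seteqP; split => w /=; rewrite in_itv /= andbT //.
Qed.

Lemma meas_pre_le (h : Om -> R) (c : R) : measurable_fun setT h ->
  measurable [set w | c <= h w].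
Proof.
move=> mh; have := mh measurableT _ (measurable_itv `[c, +oo[); rewrite setTI.
congr measurable; apply/seteqP; split => w /=; rewrite in_itv /= andbT //.
Qed.
End MeasPre.
Theorem corollary4p6 (R : realType) (d : measure_display) (Om : measurableType d)
  (P : probability Om R) (n : nat) (X : 'I_n.+1 -> Om -> R) (k : nat) (v : R) :
  (forall i, measurable_fun setT (X i)) ->
  mutually_independent P X ->
  (forall i, has_law P (X i) (law P (X ord0))) ->
  P.-integrable setT (fun w => (X ord0 w ^+ 2)%:E) ->
  (1 <= k)%N -> (k.*2 < n.+1)%N ->
  0 < v ->
  ((expR 1 / 6)%:E * rhoF2 (law P (X ord0)) (rv_mean P (X ord0))
      (rv_sd P (X ord0)) (1 / (36 * v ^+ 2) * (k%:R / n.+1%:R)) <= v%:E)%E ->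
  (P [set w | (Delta k (fun i => X i w) >
       12 * v * rv_sd P (X ord0) * Num.sqrt (n.+1%:R / k%:R))%R]
     <= (expR (- k%:R))%:E)%E.
Proof.
move=> mX indep hlaw int2 k1 k2n v0 hrho.
have kN : (k <= n.+1)%N by rewrite -addnn in k2n; lia.
set X0 := X ord0.
have mX0 : measurable_fun setT X0 := mX ord0.
set mu := rv_mean P X0.
pose f : Om -> \bar R := fun w => ((X0 w - mu) ^+ 2)%:E.
have mfr : measurable_fun setT (fun w => (X0 w - mu) ^+ 2).
  by apply: measurable_realfun.measurable_funX; apply: measurable_realfun.measurable_funB => //; exact: measurable_cst.
have mf : measurable_fun setT f by apply/measurable_EFinP.
have f0 : forall w, (0 <= f w)%E by move=> w; rewrite lee_fin sqr_ge0.
have intf : P.-integrable setT f.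
  pose g : Om -> \bar R := fun w => (2 * X0 w ^+ 2 + 2 * mu ^+ 2)%:E.
  apply: (@le_integrable _ _ _ P setT measurableT f g mf).
    move=> w _; rewrite /f /g !abse_EFin lee_fin.
    have h2 : 0 <= 2 * X0 w ^+ 2 + 2 * mu ^+ 2 by rewrite addr_ge0 // mulr_ge0 // sqr_ge0.
    rewrite !ger0_norm ?sqr_ge0 // -subr_ge0.
    have -> : 2 * X0 w ^+ 2 + 2 * mu ^+ 2 - (X0 w - mu) ^+ 2 = (X0 w + mu) ^+ 2 by ring.
    exact: sqr_ge0.
  have -> : g = ((fun w => (2 : R)%:E * (X0 w ^+ 2)%:E) \+ (EFin \o cst (2 * mu ^+ 2)%R))%E.
    by apply: funext => w; rewrite /g /= EFinD EFinM.
  apply: integrableD => //; first exact: integrableZl.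
  exact: finite_measure_integrable_cst.
have Vfin : (\int[P]_w f w)%E \is a fin_num.
  have /integrableP [_ hlt] := intf.
  rewrite ge0_fin_numE; last exact: integral_ge0.
  by under eq_integral => w _ do rewrite -(gee0_abs (f0 w)).
set V := fine (\int[P]_w f w).
have VE : (\int[P]_w f w)%E = V%:E by rewrite fineK.
have V0 : 0 <= V by rewrite -lee_fin -VE integral_ge0.
set sig := rv_sd P X0.
have sigE : sig = Num.sqrt V by [].
have sig0 : 0 <= sig by rewrite sigE sqrtr_ge0.
have sig2 : sig ^+ 2 = V by rewrite sigE sqr_sqrtr.
set r := Num.sqrt (n.+1%:R / k%:R).
have r0 : 0 <= r := sqrtr_ge0 _.
have r2 : r ^+ 2 = n.+1%:R / k%:R by rewrite sqr_sqrtr // divr_ge0 ?ler0n.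
set s := 6 * v * sig * r.
have -> : 12 * v * sig * r = 2 * s by rewrite /s; ring.
pose B := [set y : R | s < `|y - mu|].
have mB : measurable B.
  have mh : measurable_fun setT (fun y : R => `|y - mu|).
    apply: measurableT_comp; first exact: normr_measurable.
    exact: measurable_funB.
  exact: (@meas_pre_lt _ _ _ _ s mh).
pose A := X0 @^-1` B.
have mA : measurable A.
  by have := mX0 measurableT _ mB; rewrite setTI.
set p := fine (P A).
have PA : P A = p%:E by rewrite fineK // fin_num_measure.
have p0 : 0 <= p by rewrite -lee_fin -PA measure_ge0.
have Np : n.+1%:R * p <= k%:R * expR (-2).
  have [sigp|sign] := ltP 0 sig; last first.
    have sigz : sig = 0 by apply/eqP; rewrite eq_le sign sig0.
    have sz : s = 0 by rewrite /s sigz mulr0 mul0r.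
    have Vz : V = 0 by rewrite -sig2 sigz expr0n.
    have habs : (\int[P]_w `|f w|)%E = 0.
      by under eq_integral => w _ do rewrite (gee0_abs (f0 w)); rewrite VE Vz.
    have := (ae_eq_integral_abs P measurableT mf).1 habs.
    case=> N0 [mN0 PN0 sub].
    have AN0 : A `<=` N0.
      move=> w Aw; apply: sub => /= hw; move: Aw; rewrite /A /B /= sz => Aw.
      have := hw I; rewrite /f /= => /eqP; rewrite eqe sqrf_eq0 subr_eq0 => /eqP e.
      by move: Aw; rewrite e subrr normr0 ltxx.
    have : (P A <= P N0)%E by apply: le_measure => //; rewrite inE.
    rewrite PN0 PA lee_fin => hp.
    have -> : p = 0 by apply/eqP; rewrite eq_le hp p0.
    by rewrite mulr0 mulr_ge0 ?ler0n ?expR_ge0.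
  have kp : (0 : R) < k%:R by rewrite ltr0n.
  have Np0 : (0 : R) < n.+1%:R by rewrite ltr0n.
  have rp : 0 < r by rewrite sqrtr_gt0 divr_gt0.
  have sp : 0 < s by rewrite /s !mulr_gt0.
  have mind : measurable_fun setT (\1_A : Om -> R) by exact: measurable_indic.
  have ind01 : forall w, 0 <= (\1_A w : R) <= 1.
    by move=> w; rewrite indicE; case: (w \in A); rewrite ?lexx ?ler01.
  have hind : (\int[P]_w (\1_A w)%:E)%E = p%:E.
    by rewrite integral_indic // setIT; exact: PA.
  have hsA : (\int[P]_w (s ^+ 2 * \1_A w)%:E)%E = (s ^+ 2 * p)%:E.
    have -> : (fun w => (s ^+ 2 * \1_A w)%:E) = (fun w => (s ^+ 2)%:E * (\1_A w)%:E)%E.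
      by apply: funext => w; rewrite EFinM.
    rewrite ge0_integralZl_EFin //; first by rewrite hind EFinM.
    all: try (by move=> w _; rewrite lee_fin; case/andP: (ind01 w)).
    - exact/measurable_EFinP.
    - exact: sqr_ge0.
  have mi2 : measurable_fun setT (fun w => (s ^+ 2 * \1_A w)%:E).
    apply/measurable_EFinP; apply: measurable_funM => //; exact: measurable_cst.
  have i20 : forall w, (0 <= (s ^+ 2 * \1_A w)%:E)%E.
    by move=> w; rewrite lee_fin mulr_ge0 ?sqr_ge0 //; case/andP: (ind01 w).
  have sA : forall w, A w -> s ^+ 2 <= `|X0 w - mu| ^+ 2.
    move=> w Aw; apply: lerXn2r; rewrite ?nnegrE ?normr_ge0 ?(ltW sp) //.
    exact: ltW.
  pose g : Om -> \bar R := fun w => (`|X0 w - mu| ^+ 2 * \1_A w)%:E.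
  have mg : measurable_fun setT g.
    apply/measurable_EFinP; apply: measurable_funM => //.
    apply: measurable_funX; apply: measurableT_comp; first exact: normr_measurable.
    exact: measurable_funB.
  have g0 : forall w, (0 <= g w)%E.
    by move=> w; rewrite lee_fin mulr_ge0 ?exprn_ge0 //; case/andP: (ind01 w).
  have sg : ((s ^+ 2 * p)%:E <= \int[P]_w g w)%E.
    rewrite -hsA; apply: ge0_le_integral => // w _.
    rewrite lee_fin /g indicE; case: (boolP (w \in A)) => wA; last by rewrite !mulr0.
    by rewrite !mulr1; apply: sA; rewrite inE in wA.
  have gf : (\int[P]_w g w <= \int[P]_w f w)%E.
    apply: ge0_le_integral => // w _.
    rewrite lee_fin /g /f real_normK ?num_real //.
    have := ind01 w => /andP [h0 h1].
    by rewrite -[X in _ <= X]mulr1 ler_wpM2l ?sqr_ge0.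
  have gfin : (\int[P]_w g w)%E \is a fin_num.
    rewrite ge0_fin_numE; last exact: integral_ge0.
    by apply: le_lt_trans gf _; rewrite VE ltry.
  set W := fine (\int[P]_w g w).
  have WE : (\int[P]_w g w)%E = W%:E by rewrite fineK.
  have W0 : 0 <= W by rewrite -lee_fin -WE integral_ge0.
  have sW : s ^+ 2 * p <= W by rewrite -lee_fin -WE.
  have sV : s ^+ 2 * p <= V.
    rewrite -lee_fin -VE -hsA; apply: ge0_le_integral => // w _.
    rewrite lee_fin /f indicE; case: (boolP (w \in A)) => wA.
      by rewrite mulr1 -(real_normK (num_real (X0 w - mu))); apply: sA; rewrite inE in wA.
    by rewrite mulr0 sqr_ge0.
  have s2 : s ^+ 2 = (6 * v * sig) ^+ 2 * (n.+1%:R / k%:R) by rewrite /s exprMn r2.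
  set xi := 1 / (36 * v ^+ 2) * (k%:R / n.+1%:R).
  have pxi : p <= xi.
    have -> : xi = sig ^+ 2 / s ^+ 2.
      rewrite s2 /xi; field.
      by rewrite !gt_eqF.
    by rewrite ler_pdivlMr ?exprn_gt0 // mulrC sig2.
  have hmem : ((Num.sqrt W / sig)%:E <= rhoF2 (law P X0) mu sig xi)%E.
    rewrite /rhoF2 sigp; apply: ereal_sup_ubound.
    exists d, Om, P, X0, (\1_A : Om -> R); split => //.
    by rewrite hind lee_fin.
  have e6 : (0 : R) <= expR 1 / 6 by rewrite divr_ge0 ?expR_ge0.
  have h1 : expR 1 / 6 * (Num.sqrt W / sig) <= v.
    rewrite -lee_fin EFinM; apply: le_trans hrho.
    by apply: lee_wpmul2l; rewrite ?lee_fin.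
  have ep : (0 : R) < expR 1 := expR_gt0 1.
  have hW1 : Num.sqrt W * expR 1 <= 6 * v * sig.
    have := ler_wpM2r (ltW (mulr_gt0 (ltr0n R 6) sigp)) h1.
    have -> : expR 1 / 6 * (Num.sqrt W / sig) * (6 * sig) = Num.sqrt W * expR 1.
      by field; rewrite gt_eqF.
    move=> hh; apply: (le_trans hh); rewrite le_eqVlt; apply/orP; left; apply/eqP; ring.
  have hW2 : W * expR 1 ^+ 2 <= (6 * v * sig) ^+ 2.
    have := lerXn2r 2 _ _ hW1; rewrite exprMn sqr_sqrtr //; apply.
      by rewrite nnegrE mulr_ge0 ?sqrtr_ge0 ?expR_ge0.
    by rewrite nnegrE !mulr_ge0 // ltW.
  have c0 : 0 < (6 * v * sig) ^+ 2 by rewrite exprn_gt0 // !mulr_gt0.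
  have h3 : (6 * v * sig) ^+ 2 * (n.+1%:R / k%:R * p * expR 1 ^+ 2) <= (6 * v * sig) ^+ 2 * 1.
    rewrite mulr1; apply: le_trans hW2.
    have -> : (6 * v * sig) ^+ 2 * (n.+1%:R / k%:R * p * expR 1 ^+ 2) = s ^+ 2 * p * expR 1 ^+ 2.
      by rewrite s2; ring.
    by apply: ler_wpM2r; rewrite ?exprn_ge0 ?expR_ge0.
  rewrite ler_pM2l // in h3.
  have E2 : expR (-2) = (expR 1 ^+ 2)^-1 :> R by rewrite expRN -expRM_natl mulr1.
  rewrite E2 ler_pdivlMr ?exprn_gt0 //.
  have := ler_wpM2l (ltW kp) h3; rewrite mulr1.
  have -> : k%:R * (n.+1%:R / k%:R * p * expR 1 ^+ 2) = n.+1%:R * p * expR 1 ^+ 2 :> R.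
    by field; rewrite gt_eqF.
  by [].
pose Bs (S : {set 'I_n.+1}) (i : 'I_n.+1) : set R := if i \in S then B else setT.
have mBs : forall S i, measurable (Bs S i) by move=> S i; rewrite /Bs; case: ifP.
pose US (S : {set 'I_n.+1}) := \bigcap_(i in [set: 'I_n.+1]) (X i @^-1` Bs S i).
have mUS : forall S, measurable (US S).
  move=> S; apply: fin_bigcap_measurable; first exact: finite_finset.
  by move=> i _; have := mX i measurableT _ (mBs S i); rewrite setTI.
have PUS : forall S, P (US S) = (p ^+ #|S|)%:E.
  move=> S; rewrite /US indep //.
  rewrite (eq_bigr (fun i => (if i \in S then p else 1)%:E)); last first.
    move=> i _; rewrite /Bs; case: ifP => _.
      by rewrite (hlaw i B mB); exact: PA.
    by rewrite preimage_setT probability_setT.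
  by rewrite prodEFin -big_mkcond /= prodr_const.
have mE : measurable [set w | (2 * s < Delta k (fun i => X i w))%R].
  have -> : [set w | (2 * s < Delta k (fun i => X i w))%R] =
      \bigcup_(a in [set: 'I_n.+1]) \bigcup_(b in [set: 'I_n.+1])
        ([set w | 2 * s < X a w - X b w] `&`
         [set w | (k <= count (fun i => (X a w <= X i w)%R) (enum 'I_n.+1))%N] `&`
         [set w | (k <= count (fun i => (X i w <= X b w)%R) (enum 'I_n.+1))%N]).
    apply/seteqP; split => w /=.
      move/(@Delta_char R n.+1 (fun i => X i w) k (2 * s) k1 kN) => [a [b [h1 h2 h3]]].
      by exists a => //; exists b.
    case=> a _ [b _ [[h1 h2] h3]].
    by apply/(@Delta_char R n.+1 (fun i => X i w) k (2 * s) k1 kN); exists a, b.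
  apply: fin_bigcup_measurable; first exact: finite_finset.
  move=> a _; apply: fin_bigcup_measurable; first exact: finite_finset.
  move=> b _; apply: measurableI; first apply: measurableI.
  - by apply: meas_pre_lt; apply: measurable_funB.
  - apply: measurable_count => i.
    have -> : [set w | (X a w <= X i w)%R] = [set w | 0 <= X i w - X a w].
      by apply/seteqP; split => w /=; rewrite subr_ge0.
    by apply: meas_pre_le; apply: measurable_funB.
  - apply: measurable_count => i.
    have -> : [set w | (X i w <= X b w)%R] = [set w | 0 <= X b w - X i w].
      by apply/seteqP; split => w /=; rewrite subr_ge0.
    by apply: meas_pre_le; apply: measurable_funB.
have sub : [set w | (2 * s < Delta k (fun i => X i w))%R] `<=`
    \big[setU/set0]_(S : {set 'I_n.+1} | #|S| == k) US S.
  move=> w /= hw.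
  have hc := @Delta_count R n.+1 (fun i => X i w) k mu s k1 kN hw.
  rewrite -card_count in hc.
  have [S [SA cS]] := exists_subset_card _ _ _ hc.
  rewrite -bigcup_seq_cond; exists S; first by rewrite /= mem_index_enum cS eqxx.
  move=> i _; rewrite /Bs /=; case: ifP => // iS.
  by have := fintype.subsetP SA i iS; rewrite finset.inE.
have mU : measurable (\big[setU/set0]_(S : {set 'I_n.+1} | #|S| == k) US S).
  by apply: bigsetU_measurable => S _; exact: mUS.
have hU := le_measure P (mem_set mE) (mem_set mU) sub.
apply: (le_trans hU).
apply: (le_trans (measure_bigsetU_le P _ _ _ _ mUS)).
rewrite (eq_bigr (fun _ => (p ^+ k)%:E)); last by move=> S /eqP cS; rewrite -cS; exact: PUS.
rewrite sumEFin lee_fin sumr_const.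
have -> : #|[pred S : {set 'I_n.+1} | #|S| == k]| = 'C(n.+1, k).
  by rewrite -[in RHS](card_ord n.+1) -card_draws cardsE.
rewrite -(mulr_natl (p ^+ k)).
exact: binom_tail_bound.
Qed.
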